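(* Let $(A,\rho,[-,-])$ be a Lie algebroid and let $\nabla^{(1)},\nabla^{(2)},\nabla^{(3)}$ be linear connections on $(A,\rho)$. Then for all $u,v,w\in\underline{\mathrm{Sec}}(A)$, $$R_{[\nabla^{(1)},\nabla^{(2)},\nabla^{(3)}]}(u,v)w=R_{\nabla^{(1)}}(u,v)w+R_{\nabla^{(2)}}(u,v)w+R_{\nabla^{(3)}}(u,v)w+2\nabla^{(2)}_{[u,v]}w+\sum_{i\neq j}(-1)^{i+j}[\nabla^{(i)}_u,\nabla^{(j)}_v]w,$$ where $[\nabla^{(1)},\nabla^{(2)},\nabla^{(3)}]:=\nabla^{(1)}-\nabla^{(2)}+\nabla^{(3)}$, the sum runs over ordered pairs $(i,j)$ with $i,j\in\{1,2,3\}$, $i\neq j$, and $[\nabla^{(i)}_u,\nabla^{(j)}_v]w:=\nabla^{(i)}_u\nabla^{(j)}_v w-(-1)^{\widetilde u\widetilde v}\nabla^{(j)}_v\nabla^{(i)}_u w$.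
   Context: All objects are $\mathbb{Z}_2$-graded (supergeometry); the Grassmann parity of an object $x$ is denoted $\widetilde{x}\in\mathbb{Z}_2$. An anchored vector bundle is a vector bundle $\pi: A\to M$ of supermanifolds with a vector bundle homomorphism over the identity $\rho: A\to\mathsf{T}M$; it induces an even $C^\infty(M)$-module map $\rho:\underline{\mathrm{Sec}}(A)\to\mathrm{Vect}(M)$, $\rho_u:=\rho(u)$. A Lie algebroid is an anchored vector bundle together with an $\mathbb{R}$-bilinear bracket $[-,-]$ on $\underline{\mathrm{Sec}}(A)$ such that $\widetilde{[u,v]}=\widetilde u+\widetilde v$, $[u,v]=-(-1)^{\widetilde u\widetilde v}[v,u]$, $[u,fv]=\rho_u(f)v+(-1)^{\widetilde u\widetilde f}f[u,v]$, and $[u,[v,w]]=[[u,v],w]+(-1)^{\widetilde u\widetilde v}[v,[u,w]]$ for all sections $u,v,w$ and $f\in C^\infty(M)$. A linear connection on $(A,\rho)$ is an $\mathbb{R}$-bilinear map $\nabla:\underline{\mathrm{Sec}}(A)\times\underline{\mathrm{Sec}}(A)\to\underline{\mathrm{Sec}}(A)$ with $\widetilde{\nabla_u v}=\widetilde u+\widetilde v$, $\nabla_{fu}v=f\nabla_u v$, and $\nabla_u(fv)=\rho_u(f)v+(-1)^{\widetilde u\widetilde f}f\nabla_u v$. The curvature of a linear connection $\nabla$ on a Lie algebroid is $R_\nabla(u,v)w:=\nabla_u\nabla_v w-(-1)^{\widetilde u\widetilde v}\nabla_v\nabla_u w-\nabla_{[u,v]}w$. *)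

(* Defs.v *)
(* Abstract algebraic model of a (super) Lie algebroid:
   SF = C^oo(M) (an R-algebra, Z2-graded, supercommutative),
   SS = Sec(A) (a left SF-module, Z2-graded).  Parities are given by
   homogeneity predicates homF p / homS p (p = false: even, true: odd). *)
From HB Require Import structures.
From mathcomp Require Import all_boot all_order all_algebra.
From mathcomp Require Import reals.
Set Implicit Arguments.
Unset Strict Implicit.
Unset Printing Implicit Defensive.
Import GRing.Theory Num.Theory.
Local Open Scope ring_scope.

Definition ssign (V : zmodType) (b : bool) (x : V) : V := if b then - x else x.

Record superData (R : realType) := SuperData {
  SF : algType R;
  SS : lmodType SF;
  homF : bool -> pred SF;
  homS : bool -> pred SS;
  homF0 : forall p, homF p 0;
  homFD : forall p f g, homF p f -> homF p g -> homF p (f + g);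
  homFZ : forall p (r : R) f, homF p f -> homF p (r *: f);
  homF1 : homF false 1;
  homFM : forall p q f g, homF p f -> homF q g -> homF (addb p q) (f * g);
  homF_decomp : forall f, exists f0 f1, [/\ homF false f0, homF true f1 & f = f0 + f1];
  homF_uniq : forall f, homF false f -> homF true f -> f = 0;
  supercomm : forall p q f g, homF p f -> homF q g -> f * g = ssign (p && q) (g * f);
  homS0 : forall p, homS p 0;
  homSD : forall p s t, homS p s -> homS p t -> homS p (s + t);
  homSZ : forall p q f s, homF p f -> homS q s -> homS (addb p q) (f *: s);
  homS_decomp : forall s, exists s0 s1, [/\ homS false s0, homS true s1 & s = s0 + s1];
  homS_uniq : forall s, homS false s -> homS true s -> s = 0
}.

Arguments SF {R} s0.
Arguments SS {R} s0.
Arguments homF {R} s0 _.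
Arguments homS {R} s0 _.

Section Defs.
Variables (R : realType) (D : superData R).
Local Notation F := (SF D).
Local Notation S := (SS D).

Record is_vector_field (p : bool) (X : F -> F) : Prop := {
  vf_add : forall f g, X (f + g) = X f + X g;
  vf_scale : forall (r : R) f, X (r *: f) = r *: X f;
  vf_par : forall q f, homF D q f -> homF D (addb p q) (X f);
  vf_leib : forall q f g, homF D q f ->
     X (f * g) = X f * g + ssign (p && q) (f * X g)
}.

Record is_anchor (rho : S -> F -> F) : Prop := {
  anc_add : forall u v f, rho (u + v) f = rho u f + rho v f;
  anc_lin : forall f u g, rho (f *: u) g = f * rho u g;
  anc_vf : forall p u, homS D p u -> is_vector_field p (rho u)
}.

Record is_Lie_algebroid (rho : S -> F -> F) (br : S -> S -> S) : Prop := {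
  la_anchor : is_anchor rho;
  la_addl : forall u v w, br (u + v) w = br u w + br v w;
  la_addr : forall u v w, br u (v + w) = br u v + br u w;
  la_scalel : forall (r : R) u v, br (r%:A *: u) v = r%:A *: br u v;
  la_scaler : forall (r : R) u v, br u (r%:A *: v) = r%:A *: br u v;
  la_par : forall p q u v, homS D p u -> homS D q v -> homS D (addb p q) (br u v);
  la_antisym : forall p q u v, homS D p u -> homS D q v ->
     br u v = - ssign (p && q) (br v u);
  la_leib : forall p q u f v, homS D p u -> homF D q f ->
     br u (f *: v) = rho u f *: v + ssign (p && q) (f *: br u v);
  la_jacobi : forall p q u v w, homS D p u -> homS D q v ->
     br u (br v w) = br (br u v) w + ssign (p && q) (br v (br u w))
}.

Record is_connection (rho : S -> F -> F) (nab : S -> S -> S) : Prop := {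
  conn_addl : forall u v w, nab (u + v) w = nab u w + nab v w;
  conn_addr : forall u v w, nab u (v + w) = nab u v + nab u w;
  conn_scaler : forall (r : R) u v, nab u (r%:A *: v) = r%:A *: nab u v;
  conn_par : forall p q u v, homS D p u -> homS D q v -> homS D (addb p q) (nab u v);
  conn_lin : forall f u v, nab (f *: u) v = f *: nab u v;
  conn_leib : forall p q u f v, homS D p u -> homF D q f ->
     nab u (f *: v) = rho u f *: v + ssign (p && q) (f *: nab u v)
}.

Definition curvature (br nab : S -> S -> S) (pu pv : bool) (u v w : S) : S :=
  nab u (nab v w) - ssign (pu && pv) (nab v (nab u w)) - nab (br u v) w.

Definition conn_comm (n1 n2 : S -> S -> S) (pu pv : bool) (u v w : S) : S :=
  n1 u (n2 v w) - ssign (pu && pv) (n2 v (n1 u w)).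

Definition conn_alt (n1 n2 n3 : S -> S -> S) : S -> S -> S :=
  fun u w => n1 u w - n2 u w + n3 u w.

(* index 0,1,2 |-> nab^(1), nab^(2), nab^(3) *)
Definition conn_idx (n1 n2 n3 : S -> S -> S) (i : 'I_3) : S -> S -> S :=
  match val i with 0 => n1 | 1 => n2 | _ => n3 end.

End Defs.

(* Main.v *)
Require Import Defs.
From HB Require Import structures.
From mathcomp Require Import all_boot all_order all_algebra.
From mathcomp Require Import reals.
Import GRing.Theory Num.Theory.
Local Open Scope ring_scope.

Lemma ssignD (V : zmodType) b (x y : V) : ssign b (x + y) = ssign b x + ssign b y.
Proof. by case: b => //=; rewrite opprD. Qed.
Lemma ssignB (V : zmodType) b (x y : V) : ssign b (x - y) = ssign b x - ssign b y.
Proof. by case: b => //=; rewrite opprB opprK addrC. Qed.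
Lemma ssign0 (V : zmodType) b : ssign b (0 : V) = 0.
Proof. by case: b => //=; rewrite oppr0. Qed.
Lemma ssignS (V : zmodType) b I (r : seq I) (P : pred I) (F : I -> V) :
  ssign b (\sum_(i <- r | P i) F i) = \sum_(i <- r | P i) ssign b (F i).
Proof. exact: (big_morph _ (@ssignD V b) (ssign0 V b)). Qed.
Lemma ssignM (V : zmodType) b c (x : V) : ssign b (ssign c x) = ssign (addb b c) x.
Proof. by case: b; case: c => //=; rewrite opprK. Qed.
Lemma ssignC (V : zmodType) b c (x : V) : ssign b (ssign c x) = ssign c (ssign b x).
Proof. by rewrite !ssignM addbC. Qed.

Section C.
Variables (R : realType) (D : superData R) (rho : SS D -> SF D -> SF D)
  (n : SS D -> SS D -> SS D) (Hn : is_connection rho n).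
Lemma c0 u : n u 0 = 0.
Proof. by apply: (addrI (n u 0)); rewrite -(conn_addr Hn) !addr0. Qed.
Lemma cN u x : n u (- x) = - n u x.
Proof. by apply: (addrI (n u x)); rewrite -(conn_addr Hn) !subrr c0. Qed.
Lemma cS u I (r : seq I) (P : pred I) F :
  n u (\sum_(i <- r | P i) F i) = \sum_(i <- r | P i) n u (F i).
Proof. exact: (big_morph _ (conn_addr Hn u) (c0 u)). Qed.
Lemma cs u b x : n u (ssign b x) = ssign b (n u x).
Proof. by case: b => //=; rewrite cN. Qed.
End C.
Arguments c0 {R D rho n} Hn u.
Arguments cN {R D rho n} Hn u x.
Arguments cS {R D rho n} Hn u {I} r P F.
Arguments cs {R D rho n} Hn u b x.

Lemma altE (R : realType) (D : superData R) (n1 n2 n3 : SS D -> SS D -> SS D) u x :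
  conn_alt n1 n2 n3 u x = \sum_(i < 3) ssign (odd i) (conn_idx n1 n2 n3 i u x).
Proof. by rewrite !big_ord_recr big_ord0 /= add0r. Qed.

Lemma fin (V: zmodType) (a b c S x y z : V) :
  a + b + c + S - (x - y + z) = a - x + (b - y) + (c - z) + y *+ 2 + S.
Proof.
rewrite mulr2n !opprD opprK !addrA.
rewrite -[a - x + b]addrAC -[_ - y + c]addrAC -[_ - y - z]addrAC -[_ - y + y]addrAC subrK.
rewrite [a + b - x + c]addrAC [_ + S - x]addrAC [_ + S + y]addrAC [_ + S - z]addrAC.
by rewrite [_ + y - z]addrAC.
Qed.

Theorem mainTheorem4 (R : realType) (D : superData R)
    (rho : SS D -> SF D -> SF D) (br : SS D -> SS D -> SS D)
    (n1 n2 n3 : SS D -> SS D -> SS D) :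
  is_Lie_algebroid rho br ->
  is_connection rho n1 -> is_connection rho n2 -> is_connection rho n3 ->
  forall (pu pv : bool) (u v w : SS D), homS D pu u -> homS D pv v ->
  curvature br (conn_alt n1 n2 n3) pu pv u v w =
    curvature br n1 pu pv u v w + curvature br n2 pu pv u v w
    + curvature br n3 pu pv u v w + (n2 (br u v) w) *+ 2
    + \sum_(i < 3) \sum_(j < 3 | j != i)
        ssign (odd (i + j))
          (conn_comm (conn_idx n1 n2 n3 i) (conn_idx n1 n2 n3 j) pu pv u v w).
Proof.
move=> _ H1 H2 H3 pu pv u v w _ _.
have HN : forall i, is_connection rho (conn_idx n1 n2 n3 i).
  by move=> [[|[|[|k]]] Hi] //; rewrite /conn_idx /=.
set s := (pu && pv).
have E : conn_alt n1 n2 n3 u (conn_alt n1 n2 n3 v w)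
   - ssign s (conn_alt n1 n2 n3 v (conn_alt n1 n2 n3 u w))
   = \sum_(i < 3) \sum_(j < 3) ssign (odd (i + j)) (conn_comm (conn_idx n1 n2 n3 i) (conn_idx n1 n2 n3 j) pu pv u v w).
  rewrite !altE.
  under eq_bigr => i _ do rewrite (cS (HN i)) ssignS.
  under [X in _ - ssign _ X]eq_bigr => i _ do rewrite (cS (HN i)) ssignS.
  rewrite ssignS; under [X in _ - X]eq_bigr => i _ do rewrite ssignS.
  rewrite [X in _ - X]exchange_big /= -sumrB.
  apply: eq_bigr => i _.
  rewrite -sumrB.
  apply: eq_bigr => j _.
  by rewrite (cs (HN i)) (cs (HN j)) /conn_comm !ssignM ssignB !ssignM oddD;
     congr (_ - ssign _ _); rewrite /s; case: (odd i); case: (odd j); case: (pu && pv).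
rewrite {1}/curvature E.
under eq_bigr => i _ do rewrite (bigD1 i) //= addnn odd_double /=.
rewrite big_split /=.
set Sg := \sum_(i < 3) \sum_(j < 3 | j != i) _.
rewrite altE !big_ord_recr !big_ord0 /= !add0r.
rewrite /curvature /conn_comm /conn_idx /=.
exact: fin.
Qed.
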